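(* Let $\varphi,\psi$ be non-negative locally finite Borel measures on $\mathbb R^d$ and let $f$ be a stable constrained density for $(\varphi,\psi)$. Let $X'$ be the set of unexhausted sites and $\Xi'$ the set of unsated centers. If $X'\neq\emptyset$ then $\psi(\Xi')<1$, and if $\Xi'\neq\emptyset$ then $\varphi(X')<1$. In particular, $\varphi(X')<1$ or $\psi(\Xi')<1$.
   Context: A non-negative measurable $f$ on $\mathbb R^d\times\mathbb R^d$ is a constrained density for $(\varphi,\psi)$ if $\int f(x,\xi)\psi(d\xi)\le1$ for all $x$, $\int f(x,\xi)\varphi(dx)\le 1$ for all $\xi$, and $f\le1$ everywhere. A site $x_0$ is exhausted if $\int f(x_0,\xi)\psi(d\xi)=1$ and unexhausted otherwise; a center $\xi_0$ is sated if $\int f(x,\xi_0)\varphi(dx)=1$ and unsated otherwise. $x_0$ desires $\xi_0$ if $f(x_0,\xi_0)<1$ and either $x_0$ is unexhausted or there is $\xi_1$ with $|x_0-\xi_1|>|x_0-\xi_0|$ and $f(x_0,\xi_1)>0$. $\xi_0$ desires $x_0$ if $f(x_0,\xi_0)<1$ and either $\xi_0$ is unsated or there is $x_1$ with $|x_1-\xi_0|>|x_0-\xi_0|$ and $f(x_1,\xi_0)>0$. $f$ is stable if no pair $(x_0,\xi_0)$ exists with $x_0$ desiring $\xi_0$ and $\xi_0$ desiring $x_0$. *)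

(* Defs.v *)
(* R^d is modelled as d.-tuple R,
   which MathComp-Analysis equips with the product (= Borel) sigma-algebra of
   the coordinates; R^d x R^d carries the product sigma-algebra. *)
From HB Require Import structures.
From mathcomp Require Import all_boot all_order all_algebra.
From mathcomp Require Import all_classical all_reals all_analysis.

Set Implicit Arguments.
Unset Strict Implicit.
Unset Printing Implicit Defensive.

Import Order.TTheory GRing.Theory Num.Theory.
Local Open Scope classical_set_scope.
Local Open Scope ring_scope.

Section Defs.
Context {R : realType} {d : nat}.

Local Notation T := (d.-tuple R).

Definition edist (x y : T) : R :=
  Num.sqrt (\sum_(i < d) (tnth x i - tnth y i) ^+ 2).

Definition locally_finite (mu : {measure set T -> \bar R}) : Prop :=
  forall x : T, exists2 r : R, 0 < r &
    (mu [set y | (edist x y < r)%R] < +oo)%E.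

Definition site_mass (psi : {measure set T -> \bar R}) (f : T * T -> R) (x : T)
  : \bar R := (\int[psi]_(xi in setT) (f (x, xi))%:E)%E.

Definition center_mass (phi : {measure set T -> \bar R}) (f : T * T -> R)
  (xi : T) : \bar R := (\int[phi]_(x in setT) (f (x, xi))%:E)%E.

Definition constrained_density (phi psi : {measure set T -> \bar R})
  (f : T * T -> R) : Prop :=
  [/\ measurable_fun setT f,
      (forall p, 0 <= f p),
      (forall x, (site_mass psi f x <= 1)%E),
      (forall xi, (center_mass phi f xi <= 1)%E) &
      (forall p, f p <= 1)].

Definition exhausted psi f x : Prop := site_mass psi f x = 1%E.
Definition sated phi f xi : Prop := center_mass phi f xi = 1%E.

Definition site_desires psi (f : T * T -> R) (x0 xi0 : T) : Prop :=
  f (x0, xi0) < 1 /\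
  (~ exhausted psi f x0 \/
   exists xi1, edist x0 xi1 > edist x0 xi0 /\ f (x0, xi1) > 0).

Definition center_desires phi (f : T * T -> R) (x0 xi0 : T) : Prop :=
  f (x0, xi0) < 1 /\
  (~ sated phi f xi0 \/
   exists x1, edist x1 xi0 > edist x0 xi0 /\ f (x1, xi0) > 0).

Definition stable phi psi f : Prop :=
  ~ exists x0 xi0, site_desires psi f x0 xi0 /\ center_desires phi f x0 xi0.

Definition unexhausted_sites psi f : set T := [set x | ~ exhausted psi f x].
Definition unsated_centers phi f : set T := [set xi | ~ sated phi f xi].

End Defs.

(* Main.v *)
Set Warnings "-all".
Require Import Defs.
From HB Require Import structures.
From mathcomp Require Import all_boot all_order all_algebra.
From mathcomp Require Import all_classical all_reals all_analysis.
From mathcomp Require Import measurable_realfun.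
From mathcomp Require Import ring lra.
Set Implicit Arguments.
Unset Strict Implicit.
Unset Printing Implicit Defensive.
Import Order.TTheory GRing.Theory Num.Theory.
Local Open Scope classical_set_scope.
Local Open Scope ring_scope.

Local Notation edist := Defs.edist.
Section Edist.
Variables (R : realType) (d : nat).
Implicit Types a b : d.-tuple R.

Lemma edist_coord a b i : `|tnth a i - tnth b i| <= edist a b.
Proof.
rewrite /edist -sqrtr_sqr; apply: ler_wsqrtr.
rewrite (bigD1 i) //= lerDl; apply: sumr_ge0 => j _; exact: sqr_ge0.
Qed.

Lemma edist_le_sum a b : edist a b <= \sum_(i < d) `|tnth a i - tnth b i|.
Proof.
have [H1 H2] : (\sum_(i < d) (tnth a i - tnth b i) ^+ 2 <=
    (\sum_(i < d) `|tnth a i - tnth b i|) ^+ 2) /\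
    0 <= \sum_(i < d) `|tnth a i - tnth b i|.
  elim/big_rec2: _ => [|i y1 y2 _ [IH1 IH2]]; first by rewrite expr0n.
  have n0 := normr_ge0 (tnth a i - tnth b i).
  have e := real_normK (num_real (tnth a i - tnth b i)).
  split; last by lra.
  rewrite -e; nra.
rewrite /edist -(ger0_norm H2) -sqrtr_sqr; exact: ler_wsqrtr.
Qed.

Lemma measurable_edist (c : d.-tuple R) : measurable_fun setT (edist c).
Proof.
apply: measurableT_comp; first exact: continuous_measurable_fun (@sqrt_continuous R).
apply: measurable_sum => i; apply: measurable_funX; apply: measurable_funB => //.
exact: measurable_tnth.
Qed.

Lemma measurable_ball (c : d.-tuple R) (s : R) : measurable [set y : d.-tuple R | edist c y < s].
Proof.
have := measurable_edist c measurableT (measurable_itv `]-oo, s[).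
by rewrite setTI; congr measurable; apply/seteqP; split => y /=; rewrite in_itv.
Qed.
End Edist.

Lemma locfin_sigma_finite (R : realType) (d : nat)
  (mu : {measure set (d.-tuple R) -> \bar R}) :
  locally_finite mu -> sigma_finite setT mu.
Proof.
move=> lmu.
pose B (c : d.-tuple R) (s : R) := [set y : d.-tuple R | edist c y < s].
pose ct (q : d.-tuple rat) : d.-tuple R := map_tuple ratr q.
pose F (n : nat) : set (d.-tuple R) :=
  if @unpickle (d.-tuple rat * rat)%type n is Some qs then
    (if pselect (mu (B (ct qs.1) (ratr qs.2)) < +oo)%E
     then B (ct qs.1) (ratr qs.2) else set0)
  else set0.
exists F; last first.
  move=> n; rewrite /F; case: unpickle => [[q s]|]; last by split => //; rewrite measure0.
  case: pselect => /= h; last by split => //; rewrite measure0.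
  by split => //; exact: measurable_ball.
apply/seteqP; split => [x _|//].
have [r r0 hr] := lmu x.
pose K : R := (d.+1)%:R.
have K1 : 1 <= K by rewrite /K ler1n.
have K0 : K != 0 by rewrite gt_eqF // (lt_le_trans ltr01 K1).
pose eps := r / (4 * K * K).
pose a := r / (4 * K).
pose b := r / (2 * K).
have Keps : K * eps = a by rewrite /eps /a; field; rewrite ?K0 //.
have Ka : K * a = r / 4 by rewrite /a; field; rewrite ?K0.
have Kb : K * b = r / 2 by rewrite /b; field; rewrite ?K0.
have a0 : 0 < a by rewrite /a divr_gt0 // mulr_gt0 // (lt_le_trans ltr01 K1).
have eps0 : 0 < eps by rewrite /eps divr_gt0 // !mulr_gt0 // (lt_le_trans ltr01 K1).
have ab : a < b by nra.
have [s /[!in_itv] /= /andP[as_ sb]] := rat_in_itvoo ab.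
have hq : forall i : 'I_d, exists q : rat, `|tnth x i - ratr q| < eps.
  move=> i; have : tnth x i - eps < tnth x i + eps by lra.
  move=> /rat_in_itvoo [q /[!in_itv] /= /andP[h1 h2]]; exists q.
  rewrite ltr_norml; apply/andP; split; lra.
have [g hg] := choice hq.
set qt : d.-tuple rat := mktuple g.
have ctE : forall i, tnth (ct qt) i = ratr (g i).
  by move=> i; rewrite /ct tnth_map tnth_mktuple.
have dK : (d%:R : R) <= K by rewrite /K ler_nat.
have xin : B (ct qt) (ratr s) x.
  rewrite /B /=; apply: (le_lt_trans (edist_le_sum _ _)).
  apply: (le_lt_trans (y := \sum_(i < d) eps)).
    apply: ler_sum => i _; rewrite ctE distrC; exact: ltW.
  rewrite sumr_const card_ord -mulr_natl; nra.
have sub : B (ct qt) (ratr s) `<=` B x r.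
  move=> y; rewrite /B /= => hy.
  apply: (le_lt_trans (edist_le_sum _ _)).
  apply: (le_lt_trans (y := \sum_(i < d) (eps + edist (ct qt) y))).
    apply: ler_sum => i _.
    have -> : tnth x i - tnth y i = (tnth x i - tnth (ct qt) i) + (tnth (ct qt) i - tnth y i) by ring.
    apply: (le_trans (ler_normD _ _)); apply: lerD; last exact: edist_coord.
    by rewrite ctE; exact: ltW.
  have e0 : 0 <= edist (ct qt) y by exact: sqrtr_ge0.
  rewrite sumr_const card_ord -mulr_natl; nra.
have fin : (mu (B (ct qt) (ratr s)) < +oo)%E.
  apply: le_lt_trans hr; apply: le_measure => //; rewrite inE; exact: measurable_ball.
exists (pickle (qt, s)) => //.
rewrite /F pickleK /=; case: pselect => // _.
Qed.

Section Meas.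
Variables (R : realType) (d : nat) (mu : {measure set (d.-tuple R) -> \bar R}).
Hypothesis hmu : locally_finite mu.
Definition muc := (mu : set (d.-tuple R) -> \bar R).
HB.instance Definition _ := Measure.copy muc mu.
HB.instance Definition _ := @Measure_isSigmaFinite.Build _ _ _ muc (locfin_sigma_finite hmu).

Lemma mF (T1d : measure_display) (T1 : measurableType T1d) (f : T1 * d.-tuple R -> R) :
  measurable_fun setT f -> (forall p, 0 <= f p) ->
  measurable_fun setT (fun x : T1 => (\int[mu]_(y in setT) (f (x,y))%:E : \bar R)%E).
Proof.
move=> mf f0.
have := @measurable_fun_fubini_tonelli_F _ _ T1 _ R muc (EFin \o f).
apply.
  exact/measurable_EFinP.
by move=> p /=; rewrite lee_fin.
Qed.

Lemma mG (T1d : measure_display) (T1 : measurableType T1d) (f : d.-tuple R * T1 -> R) :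
  measurable_fun setT f -> (forall p, 0 <= f p) ->
  measurable_fun setT (fun y : T1 => (\int[mu]_(x in setT) (f (x,y))%:E : \bar R)%E).
Proof.
move=> mf f0.
have := @measurable_fun_fubini_tonelli_G _ _ _ T1 R muc (EFin \o f).
apply.
  exact/measurable_EFinP.
by move=> p /=; rewrite lee_fin.
Qed.
End Meas.

Unset Implicit Arguments.
Theorem mainTheorem6 (R : realType) (d : nat)
  (phi psi : {measure set (d.-tuple R) -> \bar R})
  (f : d.-tuple R * d.-tuple R -> R) :
  locally_finite phi -> locally_finite psi ->
  constrained_density phi psi f -> stable phi psi f ->
  [/\ (unexhausted_sites psi f !=set0 ->
         (psi (unsated_centers phi f) < 1)%E),
      (unsated_centers phi f !=set0 ->
         (phi (unexhausted_sites psi f) < 1)%E) &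
      ((phi (unexhausted_sites psi f) < 1)%E \/
       (psi (unsated_centers phi f) < 1)%E)].
Proof.
move=> lphi lpsi [mf f0 hs hc f1] hst.
have mXi : measurable (unsated_centers phi f).
  have := @mG R d phi lphi _ _ f mf f0 measurableT _ (measurableC (emeasurable_set1 1%E)).
  by rewrite setTI.
have mX : measurable (unexhausted_sites psi f).
  have := @mF R d psi lpsi _ _ f mf f0 measurableT _ (measurableC (emeasurable_set1 1%E)).
  by rewrite setTI.
have P1 : unexhausted_sites psi f !=set0 -> (psi (unsated_centers phi f) < 1)%E.
  move=> [x0 hx0].
  have key : forall xi, unsated_centers phi f xi -> f (x0, xi) = 1.
    move=> xi hxi; apply/eqP; rewrite eq_le f1 /=; apply/negP => /negP.
    rewrite -ltNge => lt1; apply: hst; exists x0, xi; split; split => //; by left.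
  have lt : (site_mass psi f x0 < 1)%E.
    by rewrite lt_neqAle hs andbT; apply/eqP.
  apply: le_lt_trans lt.
  rewrite -[X in (X <= _)%E]mul1e -integral_cst //.
  rewrite /site_mass.
  have -> : (\int[psi]_(x in unsated_centers phi f) cst 1%E x =
     \int[psi]_(x in unsated_centers phi f) (f (x0, x))%:E)%E.
    by apply: eq_integral => xi /[!inE] hxi; rewrite key.
  apply: ge0_subset_integral => //.
    apply/measurable_EFinP; apply: measurableT_comp => //; exact: pair1_measurable.
  by move=> xi _; rewrite lee_fin.
have P2 : unsated_centers phi f !=set0 -> (phi (unexhausted_sites psi f) < 1)%E.
  move=> [xi0 hxi0].
  have key : forall x, unexhausted_sites psi f x -> f (x, xi0) = 1.
    move=> x hx; apply/eqP; rewrite eq_le f1 /=; apply/negP => /negP.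
    rewrite -ltNge => lt1; apply: hst; exists x, xi0; split; split => //; by left.
  have lt : (center_mass phi f xi0 < 1)%E.
    by rewrite lt_neqAle hc andbT; apply/eqP.
  apply: le_lt_trans lt.
  rewrite -[X in (X <= _)%E]mul1e -integral_cst //.
  rewrite /center_mass.
  have -> : (\int[phi]_(x in unexhausted_sites psi f) cst 1%E x =
     \int[phi]_(x in unexhausted_sites psi f) (f (x, xi0))%:E)%E.
    by apply: eq_integral => x /[!inE] hx; rewrite key.
  apply: ge0_subset_integral => //.
    apply/measurable_EFinP; apply: measurableT_comp => //; exact: pair2_measurable.
  by move=> x _; rewrite lee_fin.
split => //.
have [ne|e] := pselect (unexhausted_sites psi f !=set0).
  by right; apply: P1.
left; have -> : unexhausted_sites psi f = set0.
  by apply/seteqP; split => // x hx; apply: e; exists x.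
by rewrite measure0.
Qed.
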